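(* Let $\Gamma$ be an $\mathbb N$-metrised graph without loops, and let $G$ be its underlying graph. Let $H$ be the graph obtained from $G$ by subdividing every edge $\{e,i(e)\}$ exactly $l(e)-1$ times. Then $\operatorname{dgon}(\Gamma)\ge\operatorname{dgon}(H)$.
   Context: A graph is $(X,r,i)$, $X$ finite, $r$ idempotent, $i$ an involution, $i(x)=x\iff r(x)=x$; vertices $V$ = fixed points, half-edges $H=X\setminus V$, edges $\{e,i(e)\}$ joining $r(e),r(i(e))$, $H_v=\{e\in H:r(e)=v\}$; graphs are connected. A loop is an edge with $r(e)=r(i(e))$. An $\mathbb N$-metrised graph adds $l:X\to\mathbb N$ with $l(i(x))=l(x)$, $l(x)=0\iff x\in V$; its underlying graph is $(X,r,i)$. A subdivision operation replaces an edge $\{e,i(e)\}$ by a new vertex $w$ and two edges joining $r(e)$ to $w$ and $w$ to $r(i(e))$. For an $\mathbb N$-metrised graph: $\operatorname{PL}(\Gamma)=\{g:V\to\mathbb Z: g(r(e))-g(r(i(e)))\in l(e)\mathbb Z\ \forall e\}$; $\Delta(g)=\sum_v\big(\sum_{e\in H_v}\frac{g(v)-g(r(i(e)))}{l(e)}\big)[v]$; $D\sim D'$ iff $D-D'\in\Delta(\operatorname{PL})$; $|D|=\{E\ge0:E\sim D\}$; $r(D)=\max\{k:|D-F|\ne\emptyset$ for all effective $F$ of degree $k\}$; $\operatorname{dgon}=\min\{\deg D: r(D)\ge1\}$. The divisorial gonality of an unmetrised graph is that of the $\mathbb N$-metrised graph with all edge lengths $1$. *)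

(* Defs.v *)
From mathcomp Require Import all_boot all_order all_algebra.
From Stdlib Require Import ClassicalEpsilon.
Set Implicit Arguments. Unset Strict Implicit. Unset Printing Implicit Defensive.
Import Order.TTheory GRing.Theory Num.Theory.
Local Open Scope ring_scope.

Section Graphs.
Variables (X : finType) (r i : X -> X).

Definition isV (x : X) : bool := r x == x.

Definition adj : rel X := fun x y => [|| y == r x, x == r y | y == i x].

Definition is_graph : Prop :=
  [/\ forall x, r (r x) = r x,
      forall x, i (i x) = x,
      forall x, (i x == x) = (r x == x)
    & forall x y, connect adj x y].

Definition is_Nmetrised_graph (l : X -> nat) : Prop :=
  [/\ is_graph,
      forall x, l (i x) = l x
    & forall x, (l x == 0)%N = (r x == x)].

Definition no_loops : Prop := forall e, ~~ isV e -> r (i e) != r e.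

Variable l : X -> nat.

(* Divisors are functions X -> int; only their values on vertices matter. *)
Definition deg (D : X -> int) : int := \sum_(x | isV x) D x.
Definition effective (D : X -> int) : Prop := forall x, isV x -> 0 <= D x.
Definition subD (D F : X -> int) : X -> int := fun x => D x - F x.

Definition PL (g : X -> int) : Prop :=
  forall e, ~~ isV e -> ((l e)%:Z %| g (r e) - g (r (i e)))%Z.

Definition Lap (g : X -> int) (v : X) : int :=
  \sum_(e | ~~ isV e && (r e == v)) ((g v - g (r (i e))) %/ (l e)%:Z)%Z.

Definition lin_equiv (D D' : X -> int) : Prop :=
  exists g, PL g /\ forall v, isV v -> D v - D' v = Lap g v.

Definition linsys_nonempty (D : X -> int) : Prop :=
  exists E, effective E /\ lin_equiv E D.

(* r(D) >= k, i.e. the max of the set {k' | ...} is at least k *)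
Definition rank_ge (D : X -> int) (k : nat) : Prop :=
  exists k' : nat, (k <= k')%N /\
    forall F, effective F -> deg F = k'%:Z -> linsys_nonempty (subD D F).

Definition has_dgon_deg (n : nat) : Prop :=
  exists D, rank_ge D 1 /\ deg D = n%:Z.

Definition has_dgon_degb (n : nat) : bool :=
  if excluded_middle_informative (has_dgon_deg n) then true else false.

(* dgon = min { deg D : r(D) >= 1 } (such degrees are always >= 0) *)
Definition dgon : nat :=
  match excluded_middle_informative (exists n, has_dgon_degb n) with
  | left h => ex_minn h
  | right _ => 0%N
  end.

End Graphs.

Section Subdivision.
Variables (X : finType) (r i : X -> X) (l : X -> nat).

Definition maxl : nat := (\max_(x : X) l x)%N.
Definition T := (bool * X * 'I_maxl.+1)%type.

(* (true, e, k)  : half-edge of the k-th sub-edge of e (k = 0 .. l e - 1,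
                   counted from r e), at its end nearer to r e;
   (false, v, 0) : original vertex v;
   (false, e, k) : the k-th interior point of edge e (0 < k < l e),
                   stored only for the canonical half-edge e of {e, i e}. *)
Definition canon (e : X) : bool := (enum_rank e < enum_rank (i e))%N.

Definition valid (p : T) : bool :=
  let: (b, x, k) := p in
  if b then (r x != x) && (k < l x)%N
  else ((r x == x) && (k == 0 :> nat)) ||
       [&& r x != x, (0 < k)%N, (k < l x)%N & canon x].

Definition SubX := {p : T | valid p}.

Definition point (e : X) (k : nat) : T :=
  if k == 0%N then (false, r e, ord0)
  else if canon e then (false, e, inord k)
  else (false, i e, inord (l e - k)).

Definition r_raw (p : T) : T :=
  let: (b, x, k) := p in if b then point x k else p.

Definition i_raw (p : T) : T :=
  let: (b, x, k) := p in
  if b then (true, i x, inord (l x - 1 - k)) else p.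

Definition sub_r (p : SubX) : SubX := insubd p (r_raw (val p)).
Definition sub_i (p : SubX) : SubX := insubd p (i_raw (val p)).
(* all edges of H have length 1 (H is an unmetrised graph) *)
Definition sub_l (p : SubX) : nat := if sub_r p == p then 0%N else 1%N.

End Subdivision.

Arguments sub_r {X} r i l p.
Arguments sub_i {X} r i l p.
Arguments sub_l {X} r i l p.

(* Main.v *)
Require Import Defs.
From mathcomp Require Import all_boot all_order all_algebra zify ring.
From Stdlib Require Import ClassicalEpsilon.
Set Implicit Arguments. Unset Strict Implicit. Unset Printing Implicit Defensive.
Import Order.TTheory GRing.Theory Num.Theory.
Local Open Scope ring_scope.

Section Gen.
Variables (Y : finType) (r i : Y -> Y) (l : Y -> nat).

Lemma dgon_le n : has_dgon_deg r i l n -> (dgon r i l <= n)%N.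
Proof.
move=> h; have hb : has_dgon_degb r i l n.
  by rewrite /has_dgon_degb; case: excluded_middle_informative.
rewrite /dgon; case: excluded_middle_informative => [ex|nex].
  case: ex_minnP => m _ hm; exact: hm.
by exfalso; apply: nex; exists n.
Qed.

Lemma dgon_spec : (exists n, has_dgon_deg r i l n) -> has_dgon_deg r i l (dgon r i l).
Proof.
case=> n h; have hb : has_dgon_degb r i l n.
  by rewrite /has_dgon_degb; case: excluded_middle_informative.
rewrite /dgon; case: excluded_middle_informative => [ex|nex].
  case: ex_minnP => m hm _; move: hm; rewrite /has_dgon_degb.
  by case: excluded_middle_informative.
by exfalso; apply: nex; exists n.
Qed.

Lemma sum_single (P : pred Y) (F : Y -> int) q : P q -> (forall q, P q -> 0 <= F q) ->
  F q <= \sum_(q' | P q') F q'.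
Proof.
move=> hq hF; rewrite (bigD1 q) //= lerDl; apply: sumr_ge0 => q' /andP [h _].
exact: hF.
Qed.

Lemma sum_one (P : pred Y) (F : Y -> int) p : P p -> (forall q, P q -> 0 <= F q) ->
  \sum_(q | P q) F q = 1 -> 1 <= F p -> forall q, P q -> F q <= (if q == p then 1 else 0).
Proof.
move=> hp hF hs hFp q hq; case: eqVneq => [->|ne].
  by have := sum_single hp hF; rewrite hs.
move: hs; rewrite (bigD1 p) //=.
have := @sum_single (fun q' => P q' && (q' != p)) F q; rewrite /= hq ne => /(_ isT).
have : forall q', P q' && (q' != p) -> 0 <= F q' by move=> q' /andP [h _]; exact: hF.
move=> h1 /(_ h1) h2 hs; apply: le_trans h2 _.
have e : forall a b : int, a + b = 1 -> 1 <= a -> b <= 0 by move=> a b; lia.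
exact: e hs hFp.
Qed.


Lemma rank_gamma (D : Y -> int) : rank_ge r i l D 1 -> forall v, isV r v ->
  exists g, (PL r i l g /\ forall y, isV r y -> 0 <= D y + Lap r i l g y) /\
            1 <= D v + Lap r i l g v.
Proof.
move=> [k' [hk' hall]] v hv.
pose F := fun y => if y == v then (k' : int) else 0.
have effF : effective r F by move=> y _; rewrite /F; case: eqP.
have degF : deg r F = k'.
  rewrite /deg (bigD1 v) //= /F eqxx big1 ?addr0 // => y /andP [_ /negbTE ->] //.
have [E [effE [g [hg hE]]]] := hall F effF degF.
exists g; split; first split => //.
  move=> y hy; have := hE y hy; have := effE y hy; rewrite /subD /F.
  case: eqP => _; lia.
have := hE v hv; have := effE v hv; rewrite /subD /F eqxx; lia.
Qed.

Lemma exists_dgon : exists n, has_dgon_deg r i l n.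
Proof.
pose D1 := fun _ : Y => (1 : int).
have d0 : 0 <= deg r D1 by apply: sumr_ge0.
exists `|deg r D1|%N; exists D1; split; last by rewrite gez0_abs.
exists 1%N; split => // F effF degF.
exists (fun y => 1 - F y); split.
  move=> y hy; have := @sum_single (isV r) F y hy effF.
  move: degF; rewrite /deg => ->; rewrite subr_ge0.
  done.
exists (fun _ => 0); split; first by move=> e _; rewrite subrr dvdz0.
move=> v hv; rewrite /subD /Lap big1 ?subrr // => e _.
by rewrite div0z.
Qed.

End Gen.

Section H.
Variables (X : finType) (r i : X -> X) (l : X -> nat).
Hypothesis Hr : forall x, r (r x) = r x.
Hypothesis Hi : forall x, i (i x) = x.
Hypothesis Hir : forall x, (i x == x) = (r x == x).
Hypothesis Hl : forall x, l (i x) = l x.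
Hypothesis Hl0 : forall x, (l x == 0)%N = (r x == x).

Local Notation S := (SubX r i l).
Local Notation sr := (sub_r r i l).
Local Notation si := (sub_i r i l).

Lemma lmax x : (l x <= maxl l)%N.
Proof. exact: (leq_bigmax x). Qed.

Lemma inordK' x k : (k < l x)%N -> nat_of_ord (inord k : 'I_(maxl l).+1) = k.
Proof. move=> h; apply: inordK; have := lmax x; lia. Qed.

Lemma he_i x : r x != x -> r (i x) != i x.
Proof.
move=> h; apply/negP => /eqP h2.
have : i (i x) == i x by rewrite Hir h2.
by rewrite Hi eq_sym Hir (negbTE h).
Qed.

Lemma lpos x : r x != x -> (0 < l x)%N.
Proof. by move=> h; rewrite lt0n Hl0. Qed.

Lemma canon_i x : r x != x -> canon i x = ~~ canon i (i x).
Proof.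
move=> h; rewrite /canon Hi.
have ne : enum_rank x != enum_rank (i x).
  apply/negP => /eqP/enum_rank_inj e.
  by move: (Hir x); rewrite -e eqxx (negbTE h).
move: ne; rewrite neq_ltn; case/orP => h1.
  by rewrite h1 ltnNge ltnW.
by rewrite h1 ltnNge ltnW.
Qed.

Lemma valid_point x k : r x != x -> (k < l x)%N -> valid r i (point r i l x k).
Proof.
move=> hx hk; rewrite /point /valid.
case: eqP => [_|/eqP k0]; first by rewrite Hr eqxx.
have lp := lpos hx.
case: ifP => hc.
  by rewrite hx (inordK' hk) lt0n k0 hk hc orbT.
have hk' : (l x - k < l (i x))%N by rewrite Hl; lia.
rewrite he_i // (inordK' hk').
idtac.
rewrite hk'; have -> : (0 < l x - k)%N by lia.
by rewrite -[canon i (i x)]negbK -canon_i // hc orbT.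
Qed.

Lemma valid_iraw x k : r x != x -> (k < l x)%N ->
  valid r i ((true, i x, inord (l x - 1 - k)) : T l).
Proof.
move=> hx hk; rewrite /valid he_i //=.
have hk' : (l x - 1 - k < l (i x))%N by rewrite Hl; have := lpos hx; lia.
by rewrite (inordK' hk').
Qed.

Lemma srE q : val (sr q) = r_raw r i (val q).
Proof.
rewrite /sub_r; case: q => [[[b x] k] hv] /=.
case: b hv => hv /=; last by rewrite insubdK.
rewrite insubdK //; move: hv; rewrite /= => /andP [hx hk].
exact: valid_point.
Qed.

Lemma siE q : val (si q) = i_raw i (val q).
Proof.
rewrite /sub_i; case: q => [[[b x] k] hv] /=.
case: b hv => hv /=; last by rewrite insubdK.
rewrite insubdK //; move: hv; rewrite /= => /andP [hx hk].
exact: valid_iraw.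
Qed.

Lemma isVH q : isV sr q = ~~ (val q).1.1.
Proof.
rewrite /isV -val_eqE srE; case: q => [[[b x] k] hv] /=.
case: b hv => /= _; last by rewrite eqxx.
rewrite /point; by case: ifP => _ //; case: ifP.
Qed.

Lemma sub_l1 q : ~~ isV sr q -> sub_l r i l q = 1%N.
Proof. by rewrite /sub_l /isV => /negbTE ->. Qed.

Lemma sisi q : si (si q) = q.
Proof.
apply: val_inj; rewrite !siE; case: q => [[[b x] k] hv] /=.
case: b hv => //= /andP [hx hk]; rewrite Hi Hl; congr (_,_).
apply: val_inj.
have h1 : (l x - 1 - k < l (i x))%N by rewrite Hl; have := lpos hx; lia.
rewrite /= (inordK' h1).
have h2 : (l x - 1 - (l x - 1 - k) < l x)%N by have := lpos hx; lia.
rewrite (inordK' h2); have := lpos hx; lia.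
Qed.


Variable p0 : S.
Definition hq x k : S := insubd p0 ((true, x, inord k) : T l).
Definition pt x k : S := insubd p0 (point r i l x k).
Definition ov v : S := insubd p0 ((false, v, ord0) : T l).
Definition nbr q := sr (si q).

Lemma hqE x k : r x != x -> (k < l x)%N -> val (hq x k) = (true, x, inord k).
Proof. by move=> hx hk; rewrite insubdK // unfold_in /= hx (inordK' hk) hk. Qed.

Lemma ptE x k : r x != x -> (k < l x)%N -> val (pt x k) = point r i l x k.
Proof. by move=> hx hk; rewrite insubdK //; apply: valid_point. Qed.

Lemma ovE v : r v == v -> val (ov v) = (false, v, ord0).
Proof. by move=> hv; rewrite insubdK // unfold_in /= hv. Qed.

Lemma sr_hq x k : r x != x -> (k < l x)%N -> sr (hq x k) = pt x k.
Proof. by move=> hx hk; apply: val_inj; rewrite srE hqE // ptE //= (inordK' hk). Qed.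

Lemma si_hq x k : r x != x -> (k < l x)%N -> si (hq x k) = hq (i x) (l x - 1 - k).
Proof.
move=> hx hk; apply: val_inj; rewrite siE !hqE ?he_i //= ?(inordK' hk) //.
rewrite Hl; have := lpos hx; lia.
Qed.

Lemma nbr_hq x k : r x != x -> (k < l x)%N -> nbr (hq x k) = pt (i x) (l x - 1 - k).
Proof.
move=> hx hk; rewrite /nbr si_hq // sr_hq ?he_i // Hl; have := lpos hx; lia.
Qed.

Lemma pt0 x : r x != x -> pt x 0 = ov (r x).
Proof. by move=> hx; apply: val_inj; rewrite ptE ?lpos // ovE ?Hr. Qed.

Lemma pt_sym x k : r x != x -> (0 < k < l x)%N -> pt x k = pt (i x) (l x - k).
Proof.
move=> hx /andP [k0 hk]; apply: val_inj.
have hx' := he_i hx; have hk' : (l x - k < l (i x))%N by rewrite Hl; lia.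
rewrite ptE // ptE //.
rewrite /point; have -> : (k == 0%N) = false by lia.
have -> : (l x - k == 0)%N = false by lia.
rewrite Hi Hl (canon_i hx); case: (boolP (canon i (i x))) => hc //=.
congr (_,_); apply: val_inj.
have h2 : (l x - (l x - k) < l x)%N by lia.
rewrite /= (inordK' h2) (inordK' hk); lia.
Qed.

Lemma half_hq q : ~~ isV sr q -> exists x k, [/\ r x != x, (k < l x)%N & q = hq x k].
Proof.
rewrite isVH negbK; case: q => [[[b x] k] hv] /=; case: b hv => //= hv _; move/andP: (hv) => [hx hk].
exists x, k; split => //.
apply: val_inj; rewrite hqE //=; congr (_,_); apply: val_inj.
by rewrite /= (inordK' hk).
Qed.

Lemma vert_cases p : isV sr p ->
  (exists v, r v == v /\ p = ov v) \/
  (exists x k, [/\ r x != x, (0 < k < l x)%N & p = pt x k]).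
Proof.
rewrite isVH; case: p => [[[b x] k] hv] /=; case: b hv => //= hv _.
move/orP: (hv) => [/andP [hx /eqP k0]|/and4P [hx k0 hk hc]].
  left; exists x; split => //; apply: val_inj; rewrite ovE //=.
  by congr (_,_); apply: val_inj; rewrite /= k0.
right; exists x, k; split; rewrite ?k0 ?hk //.
apply: val_inj; rewrite ptE //= /point; have -> : (nat_of_ord k == 0%N) = false by lia.
rewrite hc; congr (_,_); apply: val_inj; by rewrite /= (inordK' hk).
Qed.


Lemma inord_inj a b : (a <= maxl l)%N -> (b <= maxl l)%N ->
  (inord a : 'I_(maxl l).+1) = inord b -> a = b.
Proof.
move=> ha hb /(congr1 val) /=; rewrite !inordK //; lia.
Qed.

Lemma pt_eq x m y n : r x != x -> r y != y -> (0 < m < l x)%N -> (0 < n < l y)%N ->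
  pt x m = pt y n -> (y = x /\ n = m) \/ (y = i x /\ n = (l x - m)%N).
Proof.
move=> hx hy /andP [m0 hm] /andP [n0 hn] /(congr1 val).
rewrite ptE // ptE //.
rewrite /point; have -> : (m == 0%N) = false by lia.
have -> : (n == 0%N) = false by lia.
have mx := lmax x; have my := lmax y; have mix := lmax (i x); have miy := lmax (i y).
rewrite Hl in mix; rewrite Hl in miy.
case: (boolP (canon i x)) => cx; case: (boolP (canon i y)) => cy [e1 e2].
- left; split => //; apply/esym/(inord_inj _ _ e2); lia.
- have ly : l x = l y by rewrite e1 Hl.
  right; split; first by rewrite e1 Hi.
  have := inord_inj _ _ e2; lia.
- have ly : l y = l x by rewrite -e1 Hl.
  right; split; first by [].
  have := inord_inj _ _ e2; lia.
- have ey : y = x by rewrite -[y]Hi -e1 Hi.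
  subst y; left; split => //.
  have := inord_inj _ _ e2; lia.
Qed.

Lemma pt_ov x m v : r x != x -> (0 < m < l x)%N -> r v == v -> pt x m != ov v.
Proof.
move=> hx /andP [m0 hm] hv; apply/negP => /eqP /(congr1 val).
rewrite ptE ?ovE // /point; have -> : (m == 0%N) = false by lia.
case: ifP => _ [e _]; first by move: hx; rewrite e (eqP hv) eqxx.
by move: (he_i hx); rewrite e (eqP hv) eqxx.
Qed.

Lemma ov_inj v w : r v == v -> r w == w -> ov v = ov w -> v = w.
Proof. by move=> hv hw /(congr1 val); rewrite !ovE // => -[]. Qed.

Lemma isV_ov v : r v == v -> isV sr (ov v).
Proof. by move=> hv; rewrite isVH ovE. Qed.

Lemma isV_pt x k : r x != x -> (k < l x)%N -> isV sr (pt x k).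
Proof. by move=> hx hk; rewrite isVH ptE // /point; case: ifP => //; case: ifP. Qed.

Lemma half_hq' x k : r x != x -> (k < l x)%N -> ~~ isV sr (hq x k).
Proof. by move=> hx hk; rewrite isVH hqE. Qed.


Definition LapH (g : S -> int) (p : S) : int :=
  \sum_(q | ~~ isV sr q && (sr q == p)) (g p - g (nbr q)).

Lemma LapHE g p : Lap sr si (sub_l r i l) g p = LapH g p.
Proof.
apply: eq_bigr => q /andP [hq /eqP <-]; by rewrite sub_l1 // divz1.
Qed.

Lemma sum_int (F : S -> int) x k : r x != x -> (0 < k < l x)%N ->
  \sum_(q | ~~ isV sr q && (sr q == pt x k)) F q =
  F (hq x k) + F (hq (i x) (l x - k)).
Proof.
move=> hx /andP [k0 hk].
have hx' := he_i hx; have hk' : (l x - k < l (i x))%N by rewrite Hl; lia.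
have ne : hq x k != hq (i x) (l x - k).
  apply/negP => /eqP /(congr1 val); rewrite !hqE // => -[e _].
  by move: (Hir x); rewrite -e eqxx (negbTE hx).
rewrite (eq_bigl (mem [:: hq x k; hq (i x) (l x - k)])); last first.
  move=> q; rewrite !inE; apply/idP/idP.
    case/andP => hv /eqP e; have [y [n [hy hn qe]]] := half_hq hv.
    move: e; rewrite qe sr_hq //.
    case: (posnP n) => [n0|n0].
      rewrite n0 pt0 // => e; move: (pt_ov hx (m:=k) (v := r y)).
      by rewrite Hr eqxx k0 hk e eqxx => /(_ isT isT).
    move=> e; case: (pt_eq hy hx _ _ e); rewrite ?n0 ?hn ?k0 ?hk //.
      by case=> -> ->; rewrite eqxx.
    case=> -> ->; rewrite Hi Hl.
    have -> : (l y - (l y - n) = n)%N by lia.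
    by rewrite eqxx orbT.
  case/orP => /eqP ->; rewrite half_hq' ?sr_hq //= -?pt_sym //; lia.
rewrite -big_uniq /=; last by rewrite inE ne.
by rewrite !big_cons big_nil addr0.
Qed.

Lemma sum_ov (F : S -> int) v : r v == v ->
  \sum_(q | ~~ isV sr q && (sr q == ov v)) F q =
  \sum_(x | ~~ isV r x && (r x == v)) F (hq x 0).
Proof.
move=> hv.
have inj : {in [set x | ~~ isV r x && (r x == v)] &, injective (hq^~ 0%N)}.
  move=> x y; rewrite !inE => /andP [hx _] /andP [hy _] /(congr1 val).
  by rewrite !hqE ?lpos // => -[].
rewrite (eq_bigl (mem [set hq x 0 | x in [set x | ~~ isV r x && (r x == v)]])).
  rewrite big_imset //=; apply: eq_bigl => x; by rewrite !inE.
move=> q; rewrite /= -topredE /=; apply/idP/imsetP.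
  case/andP => hqv /eqP e; have [y [n [hy hn qe]]] := half_hq hqv.
  move: e; rewrite qe sr_hq //.
  case: (posnP n) => [n0|n0].
    rewrite n0 pt0 // => e'.
    have e : r y = v by apply: (ov_inj _ hv e'); rewrite Hr.
    by exists y; rewrite ?inE ?hy ?e ?eqxx // qe n0.
  by move=> e; move: (@pt_ov y n v hy); rewrite n0 hn e eqxx => /(_ isT hv).
case=> x; rewrite inE => /andP [hx /eqP e] ->.
by rewrite half_hq' ?lpos // sr_hq ?lpos // pt0 // e eqxx.
Qed.


Lemma lz x : r x != x -> (l x)%:Z != 0.
Proof. by move=> hx; apply/eqP => -[] /eqP; by rewrite Hl0 (negbTE hx). Qed.

Definition sl (g : X -> int) x : int := ((g (r (i x)) - g (r x)) %/ (l x)%:Z)%Z.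

Lemma sl_spec g x : PL r i l g -> r x != x ->
  g (r (i x)) = g (r x) + (l x)%:Z * sl g x.
Proof.
move=> hg hx; have := hg (i x); rewrite /isV Hi Hl.
move/(_ (he_i hx)) => /divzK h.
by rewrite /sl mulrC h addrC subrK.
Qed.

Lemma sl_i g x : PL r i l g -> r x != x -> sl g (i x) = - sl g x.
Proof.
move=> hg hx; rewrite {1}/sl Hi Hl (sl_spec hg hx).
have e : g (r x) - (g (r x) + (l x)%:Z * sl g x) = (l x)%:Z * (- sl g x) by ring.
rewrite e mulKz //; apply/eqP => -[] /eqP; by rewrite Hl0 (negbTE hx).
Qed.

Definition ext (g : X -> int) (p : S) : int :=
  let: (b, x, k) := val p in
  if b then 0 else if r x == x then g x else g (r x) + (k : nat)%:Z * sl g x.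

Lemma ext_ov g v : r v == v -> ext g (ov v) = g v.
Proof. by move=> hv; rewrite /ext ovE // hv. Qed.

Lemma ext_pt g x k : PL r i l g -> r x != x -> (k < l x)%N ->
  ext g (pt x k) = g (r x) + k%:Z * sl g x.
Proof.
move=> hg hx hk; rewrite /ext ptE // /point.
case: eqP => [->|/eqP k0]; first by rewrite /= Hr eqxx mul0r addr0.
have hx' := he_i hx.
case: ifP => hc /=; first by rewrite (negbTE hx) (inordK' hk).
have hk' : (l x - k < l (i x))%N by rewrite Hl; lia.
rewrite (negbTE hx') (inordK' hk') sl_i // (sl_spec hg hx).
rewrite -subzn ?(ltnW hk) //; ring.
Qed.

Lemma ext_term g x k : PL r i l g -> r x != x -> (k < l x)%N ->
  ext g (sr (hq x k)) - ext g (nbr (hq x k)) = - sl g x.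
Proof.
move=> hg hx hk; have hx' := he_i hx; have lp := lpos hx.
rewrite sr_hq // nbr_hq // ext_pt // ext_pt //; last by rewrite Hl; lia.
rewrite sl_i // (sl_spec hg hx) -subzn; last by lia.
rewrite -subzn; last by lia.
ring.
Qed.

Lemma LapH_ext_ov g v : PL r i l g -> r v == v -> LapH (ext g) (ov v) = Lap r i l g v.
Proof.
move=> hg hv; rewrite /LapH sum_ov // /Lap; apply: eq_bigr => x /andP [hx /eqP e].
have := ext_term hg hx (lpos hx); rewrite sr_hq ?lpos // pt0 // e => ->.
rewrite (sl_spec hg hx) e.
have ee : g v - (g v + (l x)%:Z * sl g x) = (l x)%:Z * (- sl g x) by ring.
rewrite ee mulKz //; apply/eqP => -[] /eqP; rewrite Hl0 => /eqP h.
by move: hx; rewrite /isV h eqxx.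
Qed.

Lemma LapH_ext_int g x k : PL r i l g -> r x != x -> (0 < k < l x)%N ->
  LapH (ext g) (pt x k) = 0.
Proof.
move=> hg hx hk; rewrite /LapH sum_int //.
have hx' := he_i hx.
have h1 : (k < l x)%N by lia.
have h2 : (l x - k < l (i x))%N by rewrite Hl; lia.
have := ext_term hg hx h1; rewrite sr_hq // => ->.
have := ext_term hg hx' h2; rewrite sr_hq // -pt_sym // => ->.
by rewrite sl_i // opprK addNr.
Qed.


Lemma at_int q x k : r x != x -> (0 < k < l x)%N -> ~~ isV sr q -> sr q = pt x k ->
  q = hq x k \/ q = hq (i x) (l x - k).
Proof.
move=> hx /andP [k0 hk] hv e; have [y [n [hy hn qe]]] := half_hq hv.
move: e; rewrite qe sr_hq //.
case: (posnP n) => [n0|n0].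
  rewrite n0 pt0 // => e; move: (@pt_ov x k (r y) hx).
  by rewrite Hr eqxx k0 hk e eqxx => /(_ isT isT).
move=> e; case: (pt_eq hy hx _ _ e); rewrite ?n0 ?hn ?k0 ?hk //.
  by case=> -> ->; left.
case=> -> ->; rewrite Hi Hl; right.
by have -> : (l y - (l y - n) = n)%N by lia.
Qed.

Definition good (D : S -> int) (f : S -> int) := forall p, isV sr p -> 0 <= D p + LapH f p.

Lemma LapH_add f g p : LapH (fun q => f q + g q) p = LapH f p + LapH g p.
Proof. rewrite /LapH -big_split /=; apply: eq_bigr => q _; ring. Qed.

Lemma LapH_shift f c p : LapH (fun q => f q + c) p = LapH f p.
Proof. rewrite /LapH; apply: eq_bigr => q _; ring. Qed.

Lemma LapH_minl f g p : Num.min (f p) (g p) = f p ->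
  LapH f p <= LapH (fun q => Num.min (f q) (g q)) p.
Proof.
move=> e; rewrite /LapH; apply: ler_sum => q _; rewrite e.
have : Num.min (f (nbr q)) (g (nbr q)) <= f (nbr q) by rewrite ge_min lexx.
lia.
Qed.

Lemma LapH_minr f g p : Num.min (f p) (g p) = g p ->
  LapH g p <= LapH (fun q => Num.min (f q) (g q)) p.
Proof.
move=> e; rewrite /LapH; apply: ler_sum => q _; rewrite e.
have : Num.min (f (nbr q)) (g (nbr q)) <= g (nbr q) by rewrite ge_min lexx orbT.
lia.
Qed.

Lemma good_min D f g : good D f -> good D g -> good D (fun q => Num.min (f q) (g q)).
Proof.
move=> hf hg p hp; case: (lerP (f p) (g p)) => h.
  have e : Num.min (f p) (g p) = f p by lia.
  have := LapH_minl e; have := hf p hp; lia.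
have e : Num.min (f p) (g p) = g p by lia.
have := LapH_minr e; have := hg p hp; lia.
Qed.

Lemma good_shift D f c : good D f -> good D (fun q => f q + c).
Proof. by move=> hf p hp; rewrite LapH_shift; apply: hf. Qed.


Lemma ext_nbrs g x k : PL r i l g -> r x != x -> (0 < k < l x)%N ->
  ext g (nbr (hq x k)) = ext g (pt x k) + sl g x /\
  ext g (nbr (hq (i x) (l x - k))) = ext g (pt x k) - sl g x.
Proof.
move=> hg hx hk; have hx' := he_i hx.
have h1 : (k < l x)%N by lia.
have h2 : (l x - k < l (i x))%N by rewrite Hl; lia.
split.
  have := ext_term hg hx h1; rewrite sr_hq //; lia.
have := ext_term hg hx' h2; rewrite sr_hq // -pt_sym // sl_i //; lia.
Qed.

Lemma bend D gu gv e k : PL r i l gu -> PL r i l gv -> r e != e -> (0 < k < l e)%N ->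
  good D (ext gu) -> good D (ext gv) -> 0 <= D (pt e k) -> sl gu e != sl gv e ->
  exists f, good D f /\ 1 <= D (pt e k) + LapH f (pt e k).
Proof.
move=> hgu hgv he hk gdu gdv hD hab.
set c := ext gv (pt e k) - ext gu (pt e k).
exists (fun q => Num.min (ext gu q + c) (ext gv q)); split.
  by apply: good_min => //; apply: good_shift.
rewrite /LapH sum_int //.
have [u1 u2] := ext_nbrs hgu he hk.
have [v1 v2] := ext_nbrs hgv he hk.
rewrite u1 u2 v1 v2 /c.
move: hab hD; set A := ext gu (pt e k); set B := ext gv (pt e k).
set a := sl gu e; set b := sl gv e; lia.
Qed.


Hypothesis Hnl : no_loops r i.

Lemma half_si q : ~~ isV sr q -> ~~ isV sr (si q).
Proof. by rewrite !isVH siE; case: q => [[[b x] k] hv] /=; case: b hv. Qed.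

Lemma nbr_si q : nbr (si q) = sr q.
Proof. by rewrite /nbr sisi. Qed.

Lemma pt_i0 x : r x != x -> pt (i x) 0 = ov (r (i x)).
Proof. by move=> hx; rewrite pt0 // he_i. Qed.

Lemma ptiE x j : r x != x -> (0 < j < l x)%N -> pt (i x) j = pt x (l x - j).
Proof.
move=> hx hj; rewrite (pt_sym (he_i hx)) ?Hi ?Hl //; rewrite Hl //.
Qed.

Lemma LapH_end f x0 : r x0 != x0 -> (1 < l x0)%N ->
  (forall p, f p != 0 -> exists j, (0 < j < l x0)%N /\ p = pt x0 j) ->
  LapH f (ov (r x0)) = - f (pt x0 1).
Proof.
move=> hx0 hL supp.
have hv : r (r x0) == r x0 by rewrite Hr.
have f0 : f (ov (r x0)) = 0.
  apply/eqP; apply/negPn/negP => /supp [j [hj e]].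
  by move: (pt_ov hx0 hj hv); rewrite -e eqxx.
rewrite /LapH sum_ov // (bigD1 x0) /=; last by rewrite hx0 eqxx.
rewrite big1 ?addr0.
  rewrite nbr_hq ?lpos // f0 sub0r subn0 ptiE //; last by lia.
  by rewrite subKn //; lia.
move=> x /andP [/andP [hx /eqP ex] nx]; rewrite f0.
suff -> : f (nbr (hq x 0)) = 0 by rewrite subr0.
apply/eqP; apply/negPn/negP => /supp [j [hj e]].
move: e; rewrite nbr_hq ?lpos // subn0.
have hx' := he_i hx.
case: (posnP (l x - 1)) => [h0|hpos].
  rewrite h0 pt_i0 // => e.
  by move: (pt_ov hx0 hj (v := r (i x))); rewrite -e eqxx Hr eqxx => /(_ isT).
move=> e; case: (pt_eq hx' hx0 _ _ e); rewrite ?Hl ?hpos ?hj //=; first by lia.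
  by case=> ex0 _; move: (Hnl hx); rewrite -ex0 ex eqxx.
by case=> ex0 _; move: nx; rewrite ex0 Hi eqxx.
Qed.


Lemma LapH_mid f x0 m : r x0 != x0 -> (0 < m < l x0)%N ->
  LapH f (pt x0 m) = (f (pt x0 m) - f (pt (i x0) (l x0 - 1 - m))) +
                     (f (pt x0 m) - f (pt x0 (m - 1))).
Proof.
move=> hx hm; have hx' := he_i hx.
rewrite /LapH sum_int // nbr_hq //; last by lia.
rewrite nbr_hq //; last by rewrite Hl; lia.
rewrite Hi Hl; congr (_ + (_ - f (pt x0 _))); lia.
Qed.

Lemma LapH_zero f x0 p : r x0 != x0 ->
  (forall p, f p != 0 -> exists j, (0 < j < l x0)%N /\ p = pt x0 j) ->
  p != ov (r x0) -> p != ov (r (i x0)) ->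
  (forall j, (0 < j < l x0)%N -> p != pt x0 j) -> LapH f p = 0.
Proof.
move=> hx supp n1 n2 n3.
have f0 : forall j, (0 < j < l x0)%N -> p = pt x0 j -> False.
  by move=> j hj e; move: (n3 j hj); rewrite e eqxx.
have fp : f p = 0.
  by apply/eqP; apply/negPn/negP => /supp [j [hj e]]; apply: (f0 j hj e).
rewrite /LapH big1 // => q /andP [hq /eqP e]; rewrite fp.
suff -> : f (nbr q) = 0 by rewrite subr0.
apply/eqP; apply/negPn/negP => /supp [j [hj e2]].
have hsi := half_si hq.
have hx' := he_i hx.
case: (at_int hx hj hsi e2) => eq.
  move: e; rewrite -[q]sisi eq si_hq //; last by lia.
  rewrite sr_hq //; last by rewrite Hl; lia.
  case: (posnP (l x0 - 1 - j)) => [h0|hpos].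
    by rewrite h0 pt_i0 // => e; move: n2; rewrite -e eqxx.
  rewrite ptiE //; last by lia.
  by move=> e; apply: (f0 (l x0 - (l x0 - 1 - j))%N); [lia | rewrite e].
move: e; rewrite -[q]sisi eq si_hq //; last by rewrite Hl; lia.
rewrite Hi Hl sr_hq //; last by lia.
case: (posnP (l x0 - 1 - (l x0 - j))) => [h0|hpos].
  by rewrite h0 pt0 // => e; move: n1; rewrite -e eqxx.
by move=> e; apply: (f0 (l x0 - 1 - (l x0 - j))%N); [lia | rewrite e].
Qed.


Section Psi.
Variables (e : X) (k : nat).
Hypothesis he : r e != e.
Hypothesis hk : (0 < k < l e)%N.

Definition tt (j : nat) : int :=
  Num.min (j%:Z) (Num.min (Num.min (k%:Z) ((l e)%:Z - k%:Z)) ((l e)%:Z - j%:Z)).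

Definition psi (p : S) : int :=
  \sum_(j < l e | (0 < j)%N && (pt e j == p)) tt j.

Lemma psi_supp p : psi p != 0 -> exists j, (0 < j < l e)%N /\ p = pt e j.
Proof.
case: (boolP [exists j : 'I_(l e), (0 < j)%N && (pt e j == p)]).
  by case/existsP => j /andP [j0 /eqP <-] _; exists j; rewrite j0 ltn_ord.
move=> hn; rewrite /psi big_pred0 ?eqxx // => j.
apply/negP => hj; move/negP: hn; apply; apply/existsP; by exists j.
Qed.

Lemma psi_pt j : (j < l e)%N -> psi (pt e j) = tt j.
Proof.
move=> hj; case: (posnP j) => [j0|j0].
  rewrite /psi big_pred0; first by rewrite /tt j0; lia.
  move=> j'; apply/negP => /andP [j'0 /eqP ee].
  move: ee; rewrite j0 pt0 // => ee.
  by move: (@pt_ov e j' (r e) he); rewrite j'0 ltn_ord ee Hr !eqxx => /(_ isT isT).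
rewrite /psi (big_pred1 (Ordinal hj)) // => j' /=.
apply/idP/idP.
  case/andP => j'0 /eqP ee; case: (pt_eq he he _ _ ee); rewrite ?j'0 ?j0 ?ltn_ord ?hj //.
    by case=> _ ee2; apply/eqP; apply: val_inj.
  by case=> ee2; move: (Hir e); rewrite -ee2 eqxx (negbTE he).
by move/eqP => -> /=; rewrite j0 eqxx.
Qed.

Lemma psi_pti j : (j < l e)%N -> psi (pt (i e) j) = tt (l e - j).
Proof.
move=> hj; case: (posnP j) => [j0|j0].
  rewrite j0 pt_i0 // subn0 /tt.
  have -> : psi (ov (r (i e))) = 0.
    apply/eqP; apply/negPn/negP => /psi_supp [j' [hj' ee]].
    by move: (@pt_ov e j' (r (i e)) he hj'); rewrite -ee Hr !eqxx => /(_ isT).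
  lia.
by rewrite ptiE //; [rewrite psi_pt //; lia | lia].
Qed.

Lemma Lpsi_u : LapH psi (ov (r e)) = -1.
Proof.
rewrite LapH_end //; try lia; last exact: psi_supp.
by rewrite psi_pt; [rewrite /tt|]; lia.
Qed.

Lemma Lpsi_v : LapH psi (ov (r (i e))) = -1.
Proof.
have he' := he_i he.
rewrite LapH_end //; first by rewrite psi_pti ?Hl /tt; lia.
  by rewrite Hl; lia.
move=> p /psi_supp [j [hj ->]]; exists (l e - j)%N; split; first by rewrite Hl; lia.
by rewrite -pt_sym //; lia.
Qed.

Lemma Lpsi_mid m : (0 < m < l e)%N ->
  LapH psi (pt e m) = 2 * tt m - tt (m.+1) - tt (m - 1).
Proof.
move=> hm; rewrite LapH_mid // psi_pt ?psi_pti ?psi_pt; try lia.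
have -> : (l e - (l e - 1 - m))%N = m.+1 by lia.
ring.
Qed.

Lemma Lpsi_zero p : p != ov (r e) -> p != ov (r (i e)) ->
  (forall j, (0 < j < l e)%N -> p != pt e j) -> LapH psi p = 0.
Proof. move=> n1 n2 n3; apply: (LapH_zero he psi_supp n1 n2 n3). Qed.

End Psi.


Lemma tt_concave e k m : (0 < k < l e)%N -> (0 < m < l e)%N ->
  0 <= 2 * tt e k m - tt e k m.+1 - tt e k (m - 1) /\
  (m = k -> 1 <= 2 * tt e k m - tt e k m.+1 - tt e k (m - 1)).
Proof.
move=> hk hm; rewrite /tt.
have -> : ((m - 1)%N)%:Z = m%:Z - 1 by rewrite -subzn //; lia.
split; first by lia.
by move=> ->; lia.
Qed.

Lemma flat D gu gv e k : PL r i l gu -> PL r i l gv -> r e != e -> (0 < k < l e)%N ->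
  good D (ext gu) -> good D (ext gv) ->
  1 <= D (ov (r e)) + LapH (ext gu) (ov (r e)) ->
  1 <= D (ov (r (i e))) + LapH (ext gv) (ov (r (i e))) ->
  sl gu e = sl gv e ->
  exists f, good D f /\ 1 <= D (pt e k) + LapH f (pt e k).
Proof.
move=> hgu hgv he hk gdu gdv hu hv hab.
have he' := he_i he.
set c := ext gv (pt e k) - ext gu (pt e k).
set f1 := fun q => Num.min (ext gu q + c) (ext gv q).
have g1 : good D f1 by apply: good_min => //; apply: good_shift.
have hvu : r (r e) == r e by rewrite Hr.
have hvv : r (r (i e)) == r (i e) by rewrite Hr.
have hk' : (k < l e)%N by lia.
have cE : c = gv (r e) - gu (r e).
  by rewrite /c !ext_pt // hab; ring.
have tu : Num.min (ext gu (ov (r e)) + c) (ext gv (ov (r e))) = ext gu (ov (r e)) + c.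
  by rewrite !ext_ov // cE; lia.
have tv : Num.min (ext gu (ov (r (i e))) + c) (ext gv (ov (r (i e)))) = ext gv (ov (r (i e))).
  by rewrite !ext_ov // cE (sl_spec hgu he) (sl_spec hgv he) hab; lia.
have Lu : 1 <= D (ov (r e)) + LapH f1 (ov (r e)).
  have := @LapH_minl (fun q => ext gu q + c) (ext gv) (ov (r e)) tu.
  rewrite LapH_shift /= /f1 => h; apply: le_trans hu _; by rewrite lerD2l.
have Lv : 1 <= D (ov (r (i e))) + LapH f1 (ov (r (i e))).
  have := @LapH_minr (fun q => ext gu q + c) (ext gv) (ov (r (i e))) tv.
  rewrite /= /f1 => h; apply: le_trans hv _; by rewrite lerD2l.
exists (fun q => f1 q + psi e k q); split; last first.
  rewrite LapH_add Lpsi_mid //; have := g1 _ (isV_pt he hk').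
  have [_ h2] := tt_concave hk hk; have := h2 erefl; lia.
move=> p hp; rewrite LapH_add.
case: (eqVneq p (ov (r e))) => [->|n1].
  by rewrite Lpsi_u //; lia.
case: (eqVneq p (ov (r (i e)))) => [->|n2].
  by rewrite Lpsi_v //; lia.
case: (boolP [exists j : 'I_(l e), (0 < j)%N && (p == pt e j)]).
  case/existsP => j /andP [j0 /eqP ep]; rewrite ep in hp *.
  have hj : (0 < j < l e)%N by rewrite j0 ltn_ord.
  rewrite Lpsi_mid //; have := g1 _ hp.
  have [h1 _] := tt_concave hk hj; lia.
move=> hn; rewrite Lpsi_zero //; first by rewrite addr0; apply: g1.
move=> j hj; apply/negP => /eqP ee; move/negP: hn; apply; apply/existsP.
exists (Ordinal (proj2 (andP hj))); by rewrite /= ee eqxx (proj1 (andP hj)).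
Qed.


Lemma chip_int D gu gv e k : PL r i l gu -> PL r i l gv -> r e != e -> (0 < k < l e)%N ->
  good D (ext gu) -> good D (ext gv) -> 0 <= D (pt e k) ->
  1 <= D (ov (r e)) + LapH (ext gu) (ov (r e)) ->
  1 <= D (ov (r (i e))) + LapH (ext gv) (ov (r (i e))) ->
  exists f, good D f /\ 1 <= D (pt e k) + LapH f (pt e k).
Proof.
move=> hgu hgv he hk gdu gdv hD hu hv.
case: (boolP (sl gu e == sl gv e)) => hab.
  exact: (flat hgu hgv he hk gdu gdv hu hv (eqP hab)).
exact: (bend hgu hgv he hk gdu gdv hD hab).
Qed.

Section Transfer.
Variable D : X -> int.

Definition DH (p : S) : int := \sum_(x | isV r x && (ov x == p)) D x.

Lemma DH_ov v : r v == v -> DH (ov v) = D v.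
Proof.
move=> hv; rewrite /DH (big_pred1 v) // => x /=.
apply/idP/idP => [/andP [hx /eqP e]|/eqP ->]; last by rewrite /isV hv eqxx.
by apply/eqP; apply: ov_inj e.
Qed.

Lemma DH_pt x m : r x != x -> (0 < m < l x)%N -> DH (pt x m) = 0.
Proof.
move=> hx hm; rewrite /DH big_pred0 // => y; apply/negP => /andP [hy /eqP e].
by move: (pt_ov hx hm hy); rewrite e eqxx.
Qed.

Lemma deg_DH : deg sr DH = deg r D.
Proof.
rewrite /deg /DH (exchange_big_dep (fun x => isV r x)) //=.
apply: eq_bigr => x hx; rewrite (big_pred1 (ov x)) // => p /=.
apply/idP/idP => [/andP [_ /andP [_ /eqP <-]]|/eqP ->] //.
by rewrite isV_ov // hx eqxx.
by move=> p x _ /andP [] .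
Qed.

Definition gammaOK (g : X -> int) :=
  PL r i l g /\ forall y, isV r y -> 0 <= D y + Lap r i l g y.

Lemma good_ext g : gammaOK g -> good DH (ext g).
Proof.
move=> [hg hgD] p hp; case: (vert_cases hp) => [[v [hv ->]]|[x [m [hx hm ->]]]].
  by rewrite DH_ov // LapH_ext_ov //; apply: hgD.
by rewrite DH_pt // LapH_ext_int.
Qed.

Lemma rankH : (forall v, isV r v -> exists g, gammaOK g /\ 1 <= D v + Lap r i l g v) ->
  forall p, isV sr p -> exists f, good DH f /\ 1 <= DH p + LapH f p.
Proof.
move=> hall p hp; case: (vert_cases hp) => [[v [hv ->]]|[x [m [hx hm ->]]]].
  have [g [hg h1]] := hall v hv; exists (ext g); split; first exact: good_ext.
  by rewrite DH_ov // LapH_ext_ov //; case: hg.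
have hx' := he_i hx.
have hu0 : isV r (r x) by rewrite /isV Hr.
have hv0 : isV r (r (i x)) by rewrite /isV Hr.
have [gu [hgu hu]] := hall _ hu0.
have [gv [hgv hv]] := hall _ hv0.
apply: (chip_int hgu.1 hgv.1 hx hm (good_ext hgu) (good_ext hgv)).
- by rewrite DH_pt.
- by rewrite DH_ov // LapH_ext_ov //; case: hgu.
- by rewrite DH_ov // LapH_ext_ov //; case: hgv.
Qed.

Lemma rankH' : (forall p, isV sr p -> exists f, good DH f /\ 1 <= DH p + LapH f p) ->
  rank_ge sr si (sub_l r i l) DH 1.
Proof.
move=> hall; exists 1%N; split => // F effF degF.
have [p hp Fp] : exists2 p, isV sr p & 1 <= F p.
  case: (pickP [pred p | isV sr p && (1 <= F p)]) => [p /andP [h1 h2]|none].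
    by exists p.
  exfalso; have : deg sr F <= 0.
    rewrite /deg; apply: sumr_le0 => q hq; have := none q; rewrite /= hq /=.
    have := effF q hq; lia.
  by rewrite degF.
have [f [gf hf]] := hall p hp.
exists (fun q => DH q + LapH f q - F q); split.
  move=> q hq; have := @sum_one _ (isV sr) F p hp effF degF Fp q hq.
  have := gf q hq; case: eqP => [->|_]; lia.
exists f; split.
  by move=> q hq; rewrite sub_l1 // dvd1z.
by move=> v hv; rewrite LapHE /subD; ring.
Qed.

End Transfer.

Lemma transfer D n : rank_ge r i l D 1 -> deg r D = n%:Z ->
  has_dgon_deg sr si (sub_l r i l) n.
Proof.
move=> hrk hdeg; exists (DH D); split; last by rewrite deg_DH.
apply: rankH'; apply: rankH => v hv.
exact: rank_gamma hrk v hv.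
Qed.

End H.

Unset Implicit Arguments.
Theorem lemma4p10 (X : finType) (r i : X -> X) (l : X -> nat) :
  is_Nmetrised_graph r i l ->
  no_loops r i ->
  (dgon (sub_r r i l) (sub_i r i l) (sub_l r i l) <= dgon r i l)%N.
Proof.
move=> [[Hr Hi Hir _] Hl Hl0] Hnl.
have [D [hrk hdeg]] := dgon_spec (exists_dgon r i l).
case: (pickP (fun _ : X => true)) => [x0 _|none].
  have pv : valid r i ((false, r x0, ord0) : T l) by rewrite /= Hr !eqxx.
  pose p0 : SubX r i l := @exist (T l) (fun p => valid r i p) _ pv.
  apply: dgon_le; exact: (transfer Hr Hi Hir Hl Hl0 p0 Hnl hrk hdeg).
apply: leq_trans (leq0n _); apply: dgon_le.
exists (fun _ => 0); split; last by rewrite /deg big1.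
exists 1%N; split => // F _; rewrite /deg big_pred0 // => p.
by have := none (val p).1.2.
Qed.
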